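(* For all $t\in\mathbb N$ and $k\in\mathbb Z$ the sets $A_t(k)$, $B_t(k)$ and $C_t(k)$ are finite unions of arithmetic progressions. Their densities $a_t(k)$, $b_t(k)$ satisfy, for all $t\in\mathbb N$, $k\in\mathbb Z$: \begin{align*} a_{4t}(k)&=\tfrac12\bigl(a_{2t}(k)+b_{2t}(k)\bigr), & b_{4t}(k)&=\tfrac12\bigl(a_{2t}(k)+b_{2t}(k)\bigr),\\ a_{4t+1}(k)&=\tfrac12\bigl(a_{2t}(k)+b_{2t}(k-1)\bigr), & b_{4t+1}(k)&=\tfrac12\bigl(a_{2t+1}(k)+b_{2t+1}(k+1)\bigr),\\ a_{4t+2}(k)&=\tfrac12\bigl(a_{2t+1}(k)+b_{2t+1}(k)\bigr), & b_{4t+2}(k)&=\tfrac12\bigl(a_{2t+1}(k-1)+b_{2t+1}(k+1)\bigr),\\ a_{4t+3}(k)&=\tfrac12\bigl(a_{2t+1}(k-1)+b_{2t+1}(k)\bigr), & b_{4t+3}(k)&=\tfrac12\bigl(a_{2t+2}(k)+b_{2t+2}(k+1)\bigr), \end{align*} with initial conditions $a_0(k)=b_0(k)=1$ if $k=0$ and $0$ otherwise; $a_1(k)=\frac12$ if $k\in\{0,1\}$ and $0$ otherwise; $b_1(k)=0$ for $k>1$, $b_1(1)=\frac14$, and $b_1(k)=3\cdot 2^{k-3}$ for $k<1$.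
   Context: For $n\in\mathbb N=\{0,1,2,\dots\}$ with binary digits $\delta_j(n)$, let $\mathsf r(n)=\#\{j\ge0:\delta_{j+1}(n)=\delta_j(n)=1\}$ (number of occurrences of $\mathtt{11}$ in binary), and $d(t,n)=\mathsf r(n+t)-\mathsf r(n)$. For $t\in\mathbb N$, $k\in\mathbb Z$ define $A_t(k)=\{n\in\mathbb N:d(t,2n)=k\}$, $B_t(k)=\{n\in\mathbb N:d(t,2n+1)=k\}$, $C_t(k)=\{n\in\mathbb N:d(t,n)=k\}$, and let $a_t(k)$, $b_t(k)$ denote the asymptotic densities of $A_t(k)$, $B_t(k)$. *)

(* Defs.v *)
From mathcomp Require Import all_boot all_order all_algebra.
Set Implicit Arguments. Unset Strict Implicit. Unset Printing Implicit Defensive.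
Import Order.TTheory GRing.Theory Num.Theory.

Definition bitd (j n : nat) : bool := odd (n %/ 2 ^ j).

(* r(n) = #{ j >= 0 : delta_{j+1}(n) = delta_j(n) = 1 }.
   Digits of index >= n vanish since n < 2^n, so j ranges over j < n. *)
Definition r11 (n : nat) : nat :=
  \sum_(j < n) (bitd j.+1 n && bitd j n).

Definition dd (t n : nat) : int := (r11 (n + t))%:Z - (r11 n)%:Z.

Definition Aset (t : nat) (k : int) : pred nat := fun n => dd t (2 * n) == k.
Definition Bset (t : nat) (k : int) : pred nat := fun n => dd t (2 * n + 1) == k.
Definition Cset (t : nat) (k : int) : pred nat := fun n => dd t n == k.

Definition in_AP (a d n : nat) : Prop := exists m : nat, n = a + m * d.

Definition fin_union_AP (S : pred nat) : Prop :=
  exists s : seq (nat * nat),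
    (forall p, p \in s -> 0 < p.2) /\
    (forall n, S n <-> exists2 p, p \in s & in_AP p.1 p.2 n).

Definition has_density (S : pred nat) (dens : rat) : Prop :=
  forall eps : rat, (0 < eps)%R -> exists N0 : nat, forall N : nat, (N0 <= N)%N ->
    (`| (count S (iota 0 N))%:R / N%:R - dens | < eps)%R.

(* Main.v *)
Require Import Defs.
From mathcomp Require Import all_boot all_order all_algebra.
From mathcomp Require Import zify ring lra.
Import Order.TTheory GRing.Theory Num.Theory.
Local Open Scope ring_scope.

Lemma bitd0 n : bitd 0 n = odd n.
Proof. by rewrite /bitd expn0 divn1. Qed.

Lemma bitdS j n : bitd j.+1 n = bitd j n./2.
Proof. by rewrite /bitd expnS divnMA divn2. Qed.

Lemma bitd_big j n : (n <= j)%N -> bitd j n = false.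
Proof.
move=> h; rewrite /bitd divn_small //.
apply: (leq_trans (ltn_expl n (isT : (1 < 2)%N))).
by rewrite leq_exp2l.
Qed.

Lemma r11_ext N n : (n <= N)%N ->
  r11 n = (\sum_(j < N) (bitd j.+1 n && bitd j n))%N.
Proof.
move=> hn; rewrite /r11 -!(big_mkord xpredT (fun j => (bitd j.+1 n && bitd j n):nat)).
rewrite (@big_cat_nat _ _ _ n 0 N _ _ (leq0n n) hn) /= [X in (_ = _ + X)%N]big1_seq ?addn0 //.
move=> j /andP[_]; rewrite mem_index_iota => /andP[hj _].
by rewrite (bitd_big _ _ hj) andbF.
Qed.

Lemma r11_rec n : r11 n = ((odd n./2 && odd n) + r11 n./2)%N.
Proof.
rewrite (r11_ext n.+1 n (leqnSn n)) big_ord_recl /= bitdS !bitd0.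
congr (_ + _)%N.
rewrite (r11_ext n n./2) //.
apply: eq_bigr => i _; rewrite !bitdS //.
by rewrite leq_half_double -addnn; lia.
Qed.

Lemma r11_even m : r11 (2 * m) = r11 m.
Proof. by rewrite r11_rec mul2n doubleK odd_double andbF. Qed.

Lemma r11_odd m : r11 (2 * m + 1) = (odd m + r11 m)%N.
Proof.
rewrite r11_rec mul2n addn1 /= uphalf_double odd_double andbT //.
Qed.

Lemma dd_ee t n : dd (2 * t) (2 * n) = dd t n.
Proof. by rewrite /dd -mulnDr !r11_even. Qed.

Lemma dd_eo t n : dd (2 * t) (2 * n + 1) = dd t n + (odd (n + t))%:R - (odd n)%:R.
Proof.
rewrite /dd (_ : (2 * n + 1 + 2 * t = 2 * (n + t) + 1)%N); last by lia.
rewrite !r11_odd !PoszD !natz; ring.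
Qed.

Lemma dd_oe t n : dd (2 * t + 1) (2 * n) = dd t n + (odd (n + t))%:R.
Proof.
rewrite /dd (_ : (2 * n + (2 * t + 1) = 2 * (n + t) + 1)%N); last by lia.
rewrite r11_odd r11_even !PoszD !natz; ring.
Qed.

Lemma dd_oo t n : dd (2 * t + 1) (2 * n + 1) = dd t.+1 n - (odd n)%:R.
Proof.
rewrite /dd (_ : (2 * n + 1 + (2 * t + 1) = 2 * (n + t.+1))%N); last by lia.
rewrite r11_odd r11_even !PoszD !natz; ring.
Qed.
Definition il (S T : pred nat) : pred nat := fun n => if odd n then T n./2 else S n./2.

Lemma il_ext (P S T : pred nat) : (forall m, P (2 * m)%N = S m) ->
  (forall m, P (2 * m+1)%N = T m) -> P =1 il S T.
Proof.
move=> hS hT n; rewrite /il -{1}(odd_double_half n).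
case: (odd n); last by rewrite add0n -mul2n hS.
by rewrite add1n -addn1 -mul2n hT.
Qed.

Lemma A_even t k : Aset (2 * t) k =1 il (Aset t k) (Bset t k).
Proof. by apply: il_ext => m; rewrite /Aset /Bset dd_ee. Qed.

Lemma B_even t k : Bset (2 * t) k =1
  il (Aset t (if odd t then k-1 else k)) (Bset t (if odd t then k+1 else k)).
Proof.
apply: il_ext => m; rewrite /Aset /Bset dd_eo !oddD !mul2n ?odd_double /= ?natz;
  case: (odd t) => /=; apply/eqP/eqP; lia.
Qed.

Lemma A_odd t k : Aset (2 * t+1) k =1
  il (Aset t (if odd t then k-1 else k)) (Bset t (if odd t then k else k-1)).
Proof.
apply: il_ext => m; rewrite /Aset /Bset dd_oe !oddD !mul2n ?odd_double /= ?natz;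
  case: (odd t) => /=; apply/eqP/eqP; lia.
Qed.

Lemma B_odd t k : Bset (2 * t+1) k =1 il (Aset t.+1 k) (Bset t.+1 (k+1)).
Proof.
apply: il_ext => m; rewrite /Aset /Bset dd_oo !oddD !mul2n ?odd_double /= ?natz;
  apply/eqP/eqP; lia.
Qed.

Lemma C_il t k : Cset t k =1 il (Aset t k) (Bset t k).
Proof. by apply: il_ext. Qed.

Lemma A0 k : Aset 0 k =1 (fun _ => k == 0).
Proof. by move=> n; rewrite /Aset /dd addn0 subrr eq_sym. Qed.
Lemma B0 k : Bset 0 k =1 (fun _ => k == 0).
Proof. by move=> n; rewrite /Bset /dd addn0 subrr eq_sym. Qed.

Lemma dd0 n : dd 0 n = 0.
Proof. by rewrite /dd addn0 subrr. Qed.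

Lemma dd1_e m : dd 1 (2 * m) = (odd m)%:R.
Proof. by rewrite (dd_oe 0 m) dd0 addn0 add0r. Qed.

Lemma dd1_o m : dd 1 (2 * m + 1) = dd 1 m - (odd m)%:R.
Proof. exact: (dd_oo 0 m). Qed.

Lemma nat_split n : n = (2 * n./2 + odd n)%N.
Proof. by rewrite -{1}(odd_double_half n) addnC mul2n. Qed.

Lemma dd1_le n : dd 1 n <= 1.
Proof.
elim/ltn_ind: n => n IH.
rewrite (nat_split n); move: (nat_split n) IH; case: (odd n) => /= hn IH.
- rewrite dd1_o.
  have h : (n./2 < n)%N by lia.
  have := IH _ h; case: (odd _) => /=; rewrite ?natz; lia.
- by rewrite addn0 dd1_e; case: (odd _).
Qed.

Lemma B1_big k : 1 < k -> Bset 1 k =1 (fun _ => false).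
Proof.
move=> hk n; rewrite /Bset; apply/negbTE/eqP => e.
have := dd1_le (2 * n + 1); rewrite e; lia.
Qed.

Lemma fu_ext (S T : pred nat) : S =1 T -> fin_union_AP S -> fin_union_AP T.
Proof.
move=> e [s [hs hS]]; exists s; split => // n; rewrite -e; exact: hS.
Qed.

Lemma fu_const (b : bool) : fin_union_AP (fun _ => b).
Proof.
case: b.
- exists [:: (0, 1)]%N; split; first by move=> p; rewrite inE => /eqP ->.
  move=> n; split => // _; exists (0, 1)%N; first by rewrite inE.
  by exists n; rewrite add0n muln1.
- exists [::]; split => // n; split => //; by case.
Qed.

Lemma fu_il (S T : pred nat) : fin_union_AP S -> fin_union_AP T -> fin_union_AP (il S T).
Proof.
move=> [s [hs hS]] [s' [hs' hT]].
exists ([seq (2 * p.1, 2 * p.2)%N | p <- s] ++ [seq (2 * p.1 + 1, 2 * p.2)%N | p <- s']).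
split.
  move=> p; rewrite mem_cat => /orP[] /mapP [q hq ->] /=.
    by rewrite muln_gt0 hs.
  by rewrite muln_gt0 hs'.
move=> n; rewrite /il; split.
  have hn := nat_split n; case: (boolP (odd n)) => ho;
    [rewrite ho /= in hn * | rewrite (negbTE ho) /= addn0 in hn *].
    move=> /(proj1 (hT _)) [[a d] hq [m hm]]; exists (2 * a + 1, 2 * d)%N.
      by rewrite mem_cat; apply/orP; right; apply/mapP; exists (a, d).
    by exists m; rewrite hn hm /=; nia.
  move=> /(proj1 (hS _)) [[a d] hq [m hm]]; exists (2 * a, 2 * d)%N.
    by rewrite mem_cat; apply/orP; left; apply/mapP; exists (a, d).
  by exists m; rewrite hn hm /=; nia.
move=> [p]; rewrite mem_cat => /orP[] /mapP [q hq ->] [m /= ->].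
  have -> : (2 * q.1 + m * (2 * q.2) = 2 * (q.1 + m * q.2))%N by nia.
  rewrite mul2n odd_double doubleK; apply/(proj2 (hS _)); exists q => //; by exists m.
have -> : (2 * q.1 + 1 + m * (2 * q.2) = (2 * (q.1 + m * q.2)).+1)%N by nia.
rewrite /= mul2n odd_double /= uphalf_double; apply/(proj2 (hT _)); exists q => //; by exists m.
Qed.

Lemma count_iotaS (S : pred nat) N :
  count S (iota 0 N.+1) = (count S (iota 0 N) + S N)%N.
Proof. by rewrite -addn1 iotaD count_cat /= add0n addn0. Qed.

Lemma count_il (S T : pred nat) N :
  count (il S T) (iota 0 N) = (count S (iota 0 (uphalf N)) + count T (iota 0 N./2))%N.
Proof.
elim: N => [//|N IH].
have e1 : uphalf N.+1 = N./2.+1 by [].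
have e2 : N.+1./2 = uphalf N by [].
rewrite count_iotaS IH e1 e2 uphalf_half /il.
by case: (odd N); rewrite ?add0n ?add1n ?count_iotaS; lia.
Qed.

Definition hdm (S : pred nat) (d : rat) := forall eps : rat, 0 < eps ->
  exists N0 : nat, forall N : nat, (N0 <= N)%N ->
    `|(count S (iota 0 N))%:R - d * N%:R| <= eps * N%:R.

Lemma hd_hdm S d : has_density S d -> hdm S d.
Proof.
move=> h eps he; have [N0 hN0] := h eps he; exists N0 => N hN.
have := hN0 N hN; case: N hN => [|N] hN.
  by rewrite /= !mulr0 subrr normr0.
move=> lt.
have hNp : 0 < (N.+1)%:R :> rat by rewrite ltr0n.
have -> : (count S (iota 0 N.+1))%:R - d * N.+1%:R =
  ((count S (iota 0 N.+1))%:R / N.+1%:R - d) * N.+1%:R.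
  by rewrite mulrBl divfK // gt_eqF.
rewrite normrM (gtr0_norm hNp) ler_pM2r //; exact: ltW.
Qed.

Lemma hdm_hd S d : hdm S d -> has_density S d.
Proof.
move=> h eps he; have [N0 hN0] := h (eps / 2) (divr_gt0 he (ltr0Sn _ 1)).
exists (maxn N0 1) => N; rewrite geq_max => /andP[hN h1].
have := hN0 N hN.
have hNp : 0 < N%:R :> rat by rewrite ltr0n.
have -> : (count S (iota 0 N))%:R - d * N%:R =
  ((count S (iota 0 N))%:R / N%:R - d) * N%:R.
  by rewrite mulrBl divfK // gt_eqF.
rewrite normrM (gtr0_norm hNp) ler_pM2r // => h2.
apply: (le_lt_trans h2); rewrite ltr_pdivrMr //; lra.
Qed.

Lemma hd_ext (S T : pred nat) d : S =1 T -> has_density S d -> has_density T d.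
Proof. by move=> e h eps he; have [N0 hN] := h eps he; exists N0 => N /hN; rewrite (eq_count e). Qed.

Lemma hd_const (b : bool) : has_density (fun _ => b) (if b then 1 else 0).
Proof.
apply: hdm_hd => eps he; exists 0%N => N _.
case: b.
  by rewrite count_predT size_iota mul1r subrr normr0 mulr_ge0 // ltW.
by rewrite count_pred0 mul0r subrr normr0 mulr_ge0 // ltW.
Qed.

Lemma hd_il (S T : pred nat) a b : has_density S a -> has_density T b ->
  has_density (il S T) ((a + b) / 2).
Proof.
move=> /hd_hdm hS /hd_hdm hT; apply: hdm_hd => eps he.
have he2 : 0 < eps / 2 by rewrite divr_gt0.
have [N1 h1] := hS _ he2; have [N2 h2] := hT _ he2.
set C := `|b - a| / 2.
have C0 : 0 <= C by rewrite divr_ge0.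
set N3 := Num.bound (C / (eps / 2)).
have hN3 : C < eps / 2 * N3%:R.
  by rewrite mulrC -ltr_pdivrMr //; apply: archi_boundP; rewrite divr_ge0 // ltW.
exists (2 * (N1 + N2) + N3)%N => N hN.
have eN : N = (uphalf N + N./2)%N.
  by rewrite uphalf_half -addnA addnn -{1}(odd_double_half N).
have hu : (N1 <= uphalf N)%N by rewrite geq_uphalf_double; lia.
have hh : (N2 <= N./2)%N by rewrite geq_half_double; lia.
have hNN3 : N3%:R <= N%:R :> rat by rewrite ler_nat; lia.
have HU := h1 _ hu; have HH := h2 _ hh.
rewrite count_il natrD.
move: HU HH; set u := uphalf N; set h := N./2 => HU HH.
set cS := (count S (iota 0 u))%:R; set cT := (count T (iota 0 h))%:R.
move: HU HH; rewrite -/cS -/cT => HU HH.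
have eNR : N%:R = u%:R + h%:R :> rat by rewrite {1}eN natrD.
have ew : u%:R = (odd N)%:R + h%:R :> rat by rewrite /u uphalf_half natrD.
set w := (odd N)%:R : rat.
have w01 : 0 <= w <= 1 by rewrite /w; case: (odd N) => /=; rewrite ?ler01 ?lexx.
set D := (b - a) / 2.
have -> : cS + cT - (a + b) / 2 * N%:R = (cS - a * u%:R) + (cT - b * h%:R) - D * w.
  by rewrite eNR ew /D; field.
set X := cS - a * u%:R; set Y := cT - b * h%:R.
have t1 : `|X + Y - D * w| <= `|X| + `|Y| + `|D * w|.
  by apply: (le_trans (ler_normB _ _)); rewrite lerD2r ler_normD.
have t2 : `|D * w| <= C.
  have eD : `|(b - a) / 2| = `|b - a| / 2 by rewrite normrM normfV (gtr0_norm (ltr0Sn _ 1)).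
  rewrite normrM /C /D eD -[X in _ <= X]mulr1; apply: ler_pM => //.
  by case/andP: w01 => w0 w1; rewrite ger0_norm.
have t3 : eps / 2 * N3%:R <= eps / 2 * N%:R by rewrite ler_pM2l.
have t4 : eps * N%:R = eps / 2 * u%:R + eps / 2 * h%:R + eps / 2 * N%:R.
  rewrite eNR; field.
lra.
lra.
Qed.

Definition fpair := ((int -> rat) * (int -> rat))%type.

Definition base (t : nat) : fpair :=
  if t == 0%N then (fun k => if k == 0 then 1 else 0, fun k => if k == 0 then 1 else 0)
  else (fun k => if (k == 0) || (k == 1) then 1 / 2 else 0,
        fun k => if 1 < k then 0 else if k == 1 then 1 / 4 else 3 * (2 : rat) ^ (k - 3)).

Definition step (t : nat) (g : nat -> fpair) : fpair :=
  if odd t then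
   (fun k => ((g t./2).1 (if odd t./2 then k - 1 else k)
              + (g t./2).2 (if odd t./2 then k else k - 1)) / 2,
    fun k => ((g t./2.+1).1 k + (g t./2.+1).2 (k + 1)) / 2)
  else
   (fun k => ((g t./2).1 k + (g t./2).2 k) / 2,
    fun k => ((g t./2).1 (if odd t./2 then k - 1 else k)
              + (g t./2).2 (if odd t./2 then k + 1 else k)) / 2).

Fixpoint abf (fuel t : nat) : fpair :=
  match fuel with
  | 0 => base t
  | f.+1 => if (t <= 1)%N then base t else step t (abf f)
  end.

Lemma abf_stable f1 f2 t : (t < f1)%N -> (t < f2)%N -> abf f1 t = abf f2 t.
Proof.
elim: f1 f2 t => [//|f IH] [//|g] t h1 h2 /=.
case: ifP => // ht.
have hs := nat_split t.
rewrite /step; case: ifP => ho.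
  rewrite (IH g t./2) ?(IH g t./2.+1) //; rewrite ho in hs; lia.
rewrite (IH g t./2) //; rewrite ho in hs; lia.
Qed.

Definition a (t : nat) : int -> rat := (abf t.+1 t).1.
Definition b (t : nat) : int -> rat := (abf t.+1 t).2.

Lemma ab_step t : (1 < t)%N -> abf t.+1 t = step t (fun u => abf u.+1 u).
Proof.
move=> ht /=; rewrite leqNgt ht /=.
have hs := nat_split t.
rewrite /step; case: ifP => ho.
  rewrite (abf_stable t t./2.+1 t./2) ?(abf_stable t t./2.+2 t./2.+1) //; rewrite ho in hs; lia.
rewrite (abf_stable t t./2.+1 t./2) //; rewrite ho in hs; lia.
Qed.

Lemma a_even h k : a (2 * h) k = (a h k + b h k) / 2.
Proof.
case: h => [|h].
  by rewrite /a /b /=; case: (k == 0).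
rewrite /a /b ab_step; last by lia.
by rewrite /step mul2n odd_double doubleK.
Qed.

Lemma b_even h k : b (2 * h) k =
  (a h (if odd h then k - 1 else k) + b h (if odd h then k + 1 else k)) / 2.
Proof.
case: h => [|h].
  by rewrite /a /b /=; case: (k == 0).
rewrite /a /b ab_step; last by lia.
by rewrite /step mul2n odd_double doubleK.
Qed.

Lemma a_odd h k : a (2 * h + 1) k =
  (a h (if odd h then k - 1 else k) + b h (if odd h then k else k - 1)) / 2.
Proof.
case: h => [|h].
  rewrite /a /b /= subr_eq0.
  case: (eqVneq k 0) => [-> //|h0] /=; by case: (k == 1).
rewrite /a /b ab_step; last by lia.
by rewrite /step mul2n addn1 /= odd_double uphalf_double.
Qed.

Lemma b_odd h k : b (2 * h + 1) k = (a h.+1 k + b h.+1 (k + 1)) / 2.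
Proof.
case: h => [|h].
  rewrite /a /b /=.
  have [hk|hk] := ltrP 1 k.
    have -> : (1 < k + 1) = true by apply/idP; lia.
    have -> : (k == 0) = false by apply/negbTE/eqP => e; lia.
    have -> : (k == 1) = false by apply/negbTE/eqP => e; lia.
    by [].
  case: (eqVneq k 1) => [-> //|h1].
  case: (eqVneq k 0) => [-> //|h0] /=.
  have -> : (1 < k + 1) = false by apply/negbTE; rewrite -leNgt; lia.
  have -> : (k + 1 == 1) = false by apply/negbTE/eqP => e; lia.
  rewrite (_ : k + 1 - 3 = (k - 3) + 1); last by ring.
  rewrite (@expfzDr _ 2 (k - 3) 1) // expr1z; by field.
rewrite /a /b ab_step; last by lia.
by rewrite /step mul2n addn1 /= odd_double uphalf_double.
Qed.

Arguments fu_ext [S T].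
Arguments fu_il [S T].
Arguments hd_ext [S T d].
Arguments hd_il [S T a b].
Arguments B1_big [k].

Definition Pt t := forall k, [/\ fin_union_AP (Aset t k), fin_union_AP (Bset t k),
  has_density (Aset t k) (a t k) & has_density (Bset t k) (b t k)].

Lemma P0 : Pt 0.
Proof.
move=> k; split.
- exact: fu_ext (fun n => esym (A0 k n)) (fu_const _).
- exact: fu_ext (fun n => esym (B0 k n)) (fu_const _).
- exact: hd_ext (fun n => esym (A0 k n)) (hd_const (k == 0)).
- exact: hd_ext (fun n => esym (B0 k n)) (hd_const (k == 0)).
Qed.

Lemma A_ev h (Ph : Pt h) k :
  fin_union_AP (Aset (2 * h) k) /\ has_density (Aset (2 * h) k) (a (2 * h) k).
Proof.
have [fa fb da db] := Ph k; split.
  exact: fu_ext (fun n => esym (A_even h k n)) (fu_il fa fb).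
rewrite a_even; exact: hd_ext (fun n => esym (A_even h k n)) (hd_il da db).
Qed.

Lemma B_ev h (Ph : Pt h) k :
  fin_union_AP (Bset (2 * h) k) /\ has_density (Bset (2 * h) k) (b (2 * h) k).
Proof.
have [fa _ da _] := Ph (if odd h then k - 1 else k).
have [_ fb _ db] := Ph (if odd h then k + 1 else k).
split.
  exact: fu_ext (fun n => esym (B_even h k n)) (fu_il fa fb).
rewrite b_even; exact: hd_ext (fun n => esym (B_even h k n)) (hd_il da db).
Qed.

Lemma A_od h (Ph : Pt h) k :
  fin_union_AP (Aset (2 * h + 1) k) /\ has_density (Aset (2 * h + 1) k) (a (2 * h + 1) k).
Proof.
have [fa _ da _] := Ph (if odd h then k - 1 else k).
have [_ fb _ db] := Ph (if odd h then k else k - 1).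
split.
  exact: fu_ext (fun n => esym (A_odd h k n)) (fu_il fa fb).
rewrite a_odd; exact: hd_ext (fun n => esym (A_odd h k n)) (hd_il da db).
Qed.

Lemma B_od h (Ph : Pt h.+1) k :
  fin_union_AP (Bset (2 * h + 1) k) /\ has_density (Bset (2 * h + 1) k) (b (2 * h + 1) k).
Proof.
have [fa _ da _] := Ph k.
have [_ fb _ db] := Ph (k + 1).
split.
  exact: fu_ext (fun n => esym (B_odd h k n)) (fu_il fa fb).
rewrite b_odd; exact: hd_ext (fun n => esym (B_odd h k n)) (hd_il da db).
Qed.

Arguments A_od [h].
Arguments B_od [h].
Arguments A_ev [h].
Arguments B_ev [h].
Lemma B1_all k : fin_union_AP (Bset 1 k) /\ has_density (Bset 1 k) (b 1 k).
Proof.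
have HA := A_od P0.
have big : forall k, 1 < k -> fin_union_AP (Bset 1 k) /\ has_density (Bset 1 k) (b 1 k).
  move=> k' hk; split.
    exact: fu_ext (fun n => esym (B1_big hk n)) (fu_const false).
  have -> : b 1 k' = 0 by rewrite /b /= hk.
  exact: hd_ext (fun n => esym (B1_big hk n)) (hd_const false).
have stp : forall k, fin_union_AP (Bset 1 (k + 1)) /\ has_density (Bset 1 (k + 1)) (b 1 (k + 1)) ->
    fin_union_AP (Bset 1 k) /\ has_density (Bset 1 k) (b 1 k).
  move=> k' [fb db]; have [fa da] := HA k'; split.
    exact: fu_ext (fun n => esym (B_odd 0 k' n)) (fu_il fa fb).
  have -> : b 1 k' = b (2 * 0 + 1) k' by [].
  rewrite b_odd; exact: hd_ext (fun n => esym (B_odd 0 k' n)) (hd_il da db).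
have [hk|hk] := ltrP 1 k; first exact: big.
have [n ->] : exists n : nat, k = 1 - n%:Z.
  exists `|1 - k|%N; rewrite abszE ger0_norm; [ring | lia].
elim: n => [|n IH].
  by apply: stp; apply: big.
apply: stp; rewrite (_ : 1 - n.+1%:Z + 1 = 1 - n%:Z) //.
rewrite -addn1 PoszD; ring.
Qed.

Lemma main t : Pt t.
Proof.
elim/ltn_ind: t => t IH.
case: t IH => [|t] IH; first exact: P0.
have hs := nat_split t.+1.
case: (boolP (odd t.+1)) => ho.
  rewrite ho in hs; move: IH; rewrite hs; set h := t.+1./2 => IH k.
  have [fa da] := A_od (IH h (ltac:(lia))) k.
  case: h IH fa da => [|h] IH fa da.
    by have [fb db] := B1_all k; split.
  by have [fb db] := B_od (IH h.+2 (ltac:(lia))) k; split.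
rewrite (negbTE ho) addn0 in hs; move: IH; rewrite hs; set h := t.+1./2 => IH k.
have hh : (0 < h)%N by rewrite /h half_gt0; case: t ho {hs IH h} => //.
have Ph := IH h (ltac:(lia)).
have [fa da] := A_ev Ph k; have [fb db] := B_ev Ph k; by split.
Qed.

Theorem proposition3p2 :
  (forall (t : nat) (k : int),
      fin_union_AP (Aset t k) /\ fin_union_AP (Bset t k) /\ fin_union_AP (Cset t k)) /\
  exists a b : nat -> int -> rat,
    (forall (t : nat) (k : int),
        has_density (Aset t k) (a t k) /\ has_density (Bset t k) (b t k)) /\
    (forall (t : nat) (k : int),
      [/\ a (4 * t)%N k = (a (2 * t)%N k + b (2 * t)%N k) / 2,
          b (4 * t)%N k = (a (2 * t)%N k + b (2 * t)%N k) / 2,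
          a (4 * t + 1)%N k = (a (2 * t)%N k + b (2 * t)%N (k - 1)) / 2 &
          b (4 * t + 1)%N k = (a (2 * t + 1)%N k + b (2 * t + 1)%N (k + 1)) / 2] /\
      [/\ a (4 * t + 2)%N k = (a (2 * t + 1)%N k + b (2 * t + 1)%N k) / 2,
          b (4 * t + 2)%N k = (a (2 * t + 1)%N (k - 1) + b (2 * t + 1)%N (k + 1)) / 2,
          a (4 * t + 3)%N k = (a (2 * t + 1)%N (k - 1) + b (2 * t + 1)%N k) / 2 &
          b (4 * t + 3)%N k = (a (2 * t + 2)%N k + b (2 * t + 2)%N (k + 1)) / 2]) /\
    (forall k : int,
      [/\ a 0%N k = (if k == 0 then 1 else 0),
          b 0%N k = (if k == 0 then 1 else 0),
          a 1%N k = (if (k == 0) || (k == 1) then 1 / 2 else 0) &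
          b 1%N k = (if 1 < k then 0 else if k == 1 then 1 / 4
                     else 3 * (2 : rat) ^ (k - 3))]).
Proof.
split.
  move=> t k; have [fa fb _ _] := main t k; split => //; split => //.
  exact: fu_ext (fun n => esym (C_il t k n)) (fu_il fa fb).
exists a, b; split.
  by move=> t k; have [_ _ da db] := main t k.
have oe : forall t, odd (2 * t) = false by move=> t; rewrite mul2n odd_double.
have oo : forall t, odd (2 * t + 1) = true by move=> t; rewrite addn1 /= oe.
split.
  move=> t k; split; split.
  - by rewrite (_ : 4 * t = 2 * (2 * t))%N ?a_even //; lia.
  - by rewrite (_ : 4 * t = 2 * (2 * t))%N ?b_even ?oe //; lia.
  - by rewrite (_ : 4 * t + 1 = 2 * (2 * t) + 1)%N ?a_odd ?oe //; lia.
  - rewrite (_ : 4 * t + 1 = 2 * (2 * t) + 1)%N; last by lia.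
    by rewrite b_odd -[(2 * t).+1]addn1.
  - by rewrite (_ : 4 * t + 2 = 2 * (2 * t + 1))%N ?a_even //; lia.
  - by rewrite (_ : 4 * t + 2 = 2 * (2 * t + 1))%N ?b_even ?oo //; lia.
  - by rewrite (_ : 4 * t + 3 = 2 * (2 * t + 1) + 1)%N ?a_odd ?oo //; lia.
  - rewrite (_ : 4 * t + 3 = 2 * (2 * t + 1) + 1)%N ?b_odd; last by lia.
    by rewrite (_ : (2 * t + 1).+1 = 2 * t + 2)%N //; lia.
by move=> k; split.
Qed.
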